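(* Let $(E\to M,\rho,\langle\cdot,\cdot\rangle,\circ)$ be a Courant algebroid and $(\mathbf I,\mathbf J,\mathbf K)$ an almost hypercomplex structure on $E$. If there exists a hypercomplex connection $\nabla$ satisfying $\nabla\mathbf I=\nabla\mathbf J=\nabla\mathbf K=0$ and, for all $X,Y\in\Gamma(E)$, $$T(X,Y)=\mathbf ID\langle X,\mathbf IY\rangle+\mathbf JD\langle X,\mathbf JY\rangle+\mathbf KD\langle X,\mathbf KY\rangle,$$ then $N_{\mathbf I,\mathbf J}=0$.
   Context: A Courant algebroid $(E\to M,\rho,\langle\cdot,\cdot\rangle,\circ)$ consists of a real vector bundle $E\to M$ over a smooth manifold, a nondegenerate symmetric fiberwise bilinear pairing $\langle\cdot,\cdot\rangle$ on $E$, a vector bundle map $\rho:E\to TM$ (the anchor), and an $\mathbb R$-bilinear operation $\circ$ on $\Gamma(E)$ (the Dorfman bracket) such that for all $f\in C^\infty(M)$, $x,y,z\in\Gamma(E)$: $x\circ(y\circ z)=(x\circ y)\circ z+y\circ(x\circ z)$; $\rho(x\circ y)=[\rho(x),\rho(y)]$; $x\circ(fy)=(\rho(x)f)y+f(x\circ y)$; $x\circ y+y\circ x=2D\langle x,y\rangle$; $(Df)\circ x=0$; $\rho(x)\langle y,z\rangle=\langle x\circ y,z\rangle+\langle y,x\circ z\rangle$. Here $D:C^\infty(M)\to\Gamma(E)$ is the $\mathbb R$-linear map defined by $\langle Df,x\rangle=\tfrac12\rho(x)f$. The Courant bracket is $[\![x,y]\!]=\tfrac12(x\circ y-y\circ x)$.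 For vector bundle endomorphisms $F,G$ of $E$ (over $\mathrm{id}_M$), the Nijenhuis concomitant is the tensor $N_{F,G}:E\otimes E\to E$ given by $N_{F,G}(X,Y)=FX\circ GY-F(X\circ GY)-G(FX\circ Y)+FG(X\circ Y)+GX\circ FY-G(X\circ FY)-F(GX\circ Y)+GF(X\circ Y)$. An almost hypercomplex structure on $E$ is a triple $(\mathbf I,\mathbf J,\mathbf K)$ of vector bundle endomorphisms of $E$ over $\mathrm{id}_M$, each orthogonal for $\langle\cdot,\cdot\rangle$, with $\mathbf I^2=\mathbf J^2=\mathbf K^2=\mathbf I\mathbf J\mathbf K=-1$. Given an almost hypercomplex structure, for $f\in C^\infty(M)$ and $X,Y\in\Gamma(E)$ set $\Delta_f(X,Y)=\langle X,Y\rangle Df+\langle\mathbf IX,Y\rangle\mathbf I Df+\langle\mathbf JX,Y\rangle\mathbf JDf+\langle\mathbf KX,Y\rangle\mathbf KDf$. A hypercomplex connection is an $\mathbb R$-bilinear map $\Gamma(E)\times\Gamma(E)\to\Gamma(E)$, $(X,Y)\mapsto\nabla_XY$, with $\nabla_{fX}Y=f\nabla_XY$ and $\nabla_X(fY)=(\rho(X)f)Y+f\nabla_XY-\Delta_f(X,Y)$. Its torsion is $T(X,Y)=\nabla_XY-\nabla_YX-[\![X,Y]\!]$. For an endomorphism $P$ of $E$, $(\nabla_XP)Y:=\nabla_X(PY)-P(\nabla_XY)$, and $\nabla P=0$ means this vanishes for all $X,Y$. *)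

(* Defs.v *)
(* Algebraic model of a Courant algebroid:
   A  = C^oo(M) as a commutative R-algebra (R a real field, generalizing the reals),
   S  = Gamma(E) as an A-module, vector fields on M = R-linear derivations of A. *)
From HB Require Import structures.
From mathcomp Require Import all_boot all_order all_algebra.
Set Implicit Arguments. Unset Strict Implicit. Unset Printing Implicit Defensive.
Import Order.TTheory GRing.Theory Num.Theory.
Local Open Scope ring_scope.

Section Courant.
Variables (R : realFieldType) (A : comAlgType R) (S : lmodType A).

Definition half : A := (2^-1 : R)%:A.

Definition is_vector_field (v : A -> A) : Prop :=
  [/\ forall f g, v (f + g) = v f + v g,
      forall (r : R) f, v (r *: f) = r *: v f
    & forall f g, v (f * g) = f * v g + v f * g].

Record courant_algebroid (pair : S -> S -> A) (rho : S -> A -> A)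
    (dorf : S -> S -> S) (D : A -> S) : Prop := {
  ca_pair_sym : forall x y, pair x y = pair y x;
  ca_pair_lin : forall (a : A) x y z, pair (a *: x + y) z = a * pair x z + pair y z;
  ca_pair_nondeg : forall x, (forall y, pair x y = 0) -> x = 0;
  ca_rho_lin : forall (a : A) x y f, rho (a *: x + y) f = a * rho x f + rho y f;
  ca_rho_vf : forall x, is_vector_field (rho x);
  ca_dorf_linl : forall (r : R) x y z,
      dorf ((r%:A : A) *: x + y) z = (r%:A : A) *: dorf x z + dorf y z;
  ca_dorf_linr : forall (r : R) x y z,
      dorf z ((r%:A : A) *: x + y) = (r%:A : A) *: dorf z x + dorf z y;
  ca_D_def : forall f x, pair (D f) x = half * rho x f;
  ca_jacobi : forall x y z, dorf x (dorf y z) = dorf (dorf x y) z + dorf y (dorf x z);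
  ca_anchor_hom : forall x y f, rho (dorf x y) f = rho x (rho y f) - rho y (rho x f);
  ca_leibniz : forall (f : A) x y, dorf x (f *: y) = rho x f *: y + f *: dorf x y;
  ca_sym : forall x y, dorf x y + dorf y x = (2%:R : A) *: D (pair x y);
  ca_Dleft : forall f x, dorf (D f) x = 0;
  ca_invariance : forall x y z, rho x (pair y z) = pair (dorf x y) z + pair y (dorf x z)
}.

(* vector bundle endomorphism over id_M = C^oo(M)-linear map of sections *)
Definition bundle_endo (F : S -> S) : Prop :=
  forall (a : A) x y, F (a *: x + y) = a *: F x + F y.

Definition orthogonal (pair : S -> S -> A) (F : S -> S) : Prop :=
  forall x y, pair (F x) (F y) = pair x y.

Definition almost_hypercomplex (pair : S -> S -> A) (I J K : S -> S) : Prop :=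
  [/\ bundle_endo I /\ bundle_endo J /\ bundle_endo K,
      orthogonal pair I /\ orthogonal pair J /\ orthogonal pair K,
      (forall x, I (I x) = - x) /\ (forall x, J (J x) = - x) /\ (forall x, K (K x) = - x)
    & forall x, I (J (K x)) = - x].

Definition Delta (pair : S -> S -> A) (D : A -> S) (I J K : S -> S) (f : A) (X Y : S) : S :=
  pair X Y *: D f + pair (I X) Y *: I (D f) + pair (J X) Y *: J (D f)
  + pair (K X) Y *: K (D f).

Definition hypercomplex_connection (pair : S -> S -> A) (rho : S -> A -> A)
    (D : A -> S) (I J K : S -> S) (nabla : S -> S -> S) : Prop :=
  [/\ forall (r : R) x y z,
        nabla ((r%:A : A) *: x + y) z = (r%:A : A) *: nabla x z + nabla y z,
      forall (r : R) x y z,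
        nabla z ((r%:A : A) *: x + y) = (r%:A : A) *: nabla z x + nabla z y,
      forall (f : A) X Y, nabla (f *: X) Y = f *: nabla X Y
    & forall (f : A) X Y,
        nabla X (f *: Y) = rho X f *: Y + f *: nabla X Y - Delta pair D I J K f X Y].

Definition courant_bracket (dorf : S -> S -> S) (x y : S) : S :=
  half *: (dorf x y - dorf y x).

Definition torsion (dorf : S -> S -> S) (nabla : S -> S -> S) (X Y : S) : S :=
  nabla X Y - nabla Y X - courant_bracket dorf X Y.

Definition cov_deriv (nabla : S -> S -> S) (P : S -> S) (X Y : S) : S :=
  nabla X (P Y) - P (nabla X Y).

Definition nijenhuis (dorf : S -> S -> S) (F G : S -> S) (X Y : S) : S :=
  dorf (F X) (G Y) - F (dorf X (G Y)) - G (dorf (F X) Y) + F (G (dorf X Y))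
  + dorf (G X) (F Y) - G (dorf X (F Y)) - F (dorf (G X) Y) + G (F (dorf X Y)).

End Courant.

(* Main.v *)
Require Import Defs.
From HB Require Import structures.
From mathcomp Require Import all_boot all_order all_algebra.
Import Order.TTheory GRing.Theory Num.Theory.
Set Implicit Arguments. Unset Strict Implicit.
Local Open Scope ring_scope.

Inductive zexpr := ZAtom of nat | ZZero | ZAdd of zexpr & zexpr | ZOpp of zexpr.

Fixpoint zeval (V : zmodType) (env : seq V) (e : zexpr) : V :=
  match e with
  | ZAtom n => nth 0 env n
  | ZZero => 0
  | ZAdd a b => zeval env a + zeval env b
  | ZOpp a => - zeval env a
  end.

Fixpoint zcoef (e : zexpr) (i : nat) : int :=
  match e with
  | ZAtom n => Posz (n == i)
  | ZZero => 0
  | ZAdd a b => zcoef a i + zcoef b i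
  | ZOpp a => - zcoef a i
  end.

Fixpoint zbound (e : zexpr) : nat :=
  match e with
  | ZAtom n => n.+1
  | ZZero => 0%N
  | ZAdd a b => maxn (zbound a) (zbound b)
  | ZOpp a => zbound a
  end.

Lemma zeval_sum (V : zmodType) (env : seq V) e N :
  (zbound e <= N)%N -> zeval env e = \sum_(i < N) env`_i *~ zcoef e i.
Proof.
elim: e => [n|| a IHa b IHb | a IHa] /= H.
- rewrite (bigD1 (Ordinal H)) //= eqxx mulr1z big1 ?addr0 // => i Hi.
  have -> : (n == i) = false.
    apply/negbTE; apply: contra Hi => /eqP Hn; apply/eqP; apply: val_inj => /=; by rewrite Hn.
  by rewrite mulr0z.
- by rewrite big1 // => i _; rewrite mulr0z.
- rewrite geq_max in H; case/andP: H => Ha Hb.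
  rewrite (IHa Ha) (IHb Hb) -big_split /=; apply: eq_bigr => i _.
  by rewrite mulrzDr.
- rewrite (IHa H) -sumrN; apply: eq_bigr => i _; by rewrite mulrNz.
Qed.

Lemma zcancel (V : zmodType) (env : seq V) e :
  all (fun i => zcoef e i == 0) (iota 0 (zbound e)) -> zeval env e = 0.
Proof.
move=> /allP H; rewrite (@zeval_sum V env e (zbound e) (leqnn _)).
apply: big1 => i _.
have /H/eqP -> : (nat_of_ord i \in iota 0 (zbound e)) by rewrite mem_iota /= add0n ltn_ord.
by rewrite mulr0z.
Qed.

Ltac zinlist x l :=
  lazymatch l with
  | nil => constr:(false)
  | cons x _ => constr:(true)
  | cons _ ?l' => zinlist x l'
  end.

Ltac zcollect t acc :=
  lazymatch t with
  | (?a + ?b)%R => let acc' := zcollect a acc in zcollect b acc'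
  | (- ?a)%R => zcollect a acc
  | 0%R => acc
  | _ => let b := zinlist t acc in
         lazymatch b with true => acc | false => constr:(cons t acc) end
  end.

Ltac zindex x l :=
  lazymatch l with
  | cons x _ => constr:(O)
  | cons _ ?l' => let n := zindex x l' in constr:(S n)
  end.

Ltac zreify env t :=
  lazymatch t with
  | (?a + ?b)%R => let ra := zreify env a in let rb := zreify env b in constr:(ZAdd ra rb)
  | (- ?a)%R => let ra := zreify env a in constr:(ZOpp ra)
  | 0%R => constr:(ZZero)
  | _ => let n := zindex t env in constr:(ZAtom n)
  end.

Ltac zsolve0 :=
  lazymatch goal with
  | |- ?t = 0%R =>
    let T := type of t in
    let env := zcollect t (@nil T) in
    let e := zreify env t in
    change t with (zeval env e); apply: zcancel; vm_compute; reflexivity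
  end.

Ltac zsolve := first [zsolve0 | apply: subr0_eq; zsolve0].

Theorem mainTheorem7 (R : realFieldType) (A : comAlgType R) (S : lmodType A)
    (pair : S -> S -> A) (rho : S -> A -> A) (dorf : S -> S -> S) (D : A -> S)
    (I J K : S -> S) :
  courant_algebroid pair rho dorf D ->
  almost_hypercomplex pair I J K ->
  (exists nabla : S -> S -> S,
      [/\ hypercomplex_connection pair rho D I J K nabla,
          forall X Y, cov_deriv nabla I X Y = 0,
          forall X Y, cov_deriv nabla J X Y = 0,
          forall X Y, cov_deriv nabla K X Y = 0
        & forall X Y, torsion dorf nabla X Y =
            I (D (pair X (I Y))) + J (D (pair X (J Y))) + K (D (pair X (K Y)))]) ->
  forall X Y, nijenhuis dorf I J X Y = 0.
Proof.
move=> HC HH [nabla [Hconn HI HJ HK HT]] X Y.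
case: HC => psym plin pnd rlin rvf _ _ Ddef _ _ _ dsym _ _.
case: HH => [[eI [eJ eK]] [oI [oJ oK]] [II [JJ KK]] IJK].
have Fadd : forall F : S -> S, bundle_endo F ->
   (forall x y, F (x + y) = F x + F y) /\ (forall x, F (- x) = - F x).
  move=> F eF.
  have FD : forall x y, F (x + y) = F x + F y by move=> x y; have := eF 1 x y; rewrite !scale1r.
  have F0 : F 0 = 0.
    have h := FD 0 0; rewrite addr0 in h.
    by apply: (@addrI _ (F 0)); rewrite addr0 -h.
  split => // x; have := eF (-1) x 0; by rewrite addr0 F0 addr0 !scaleN1r.
case: (Fadd I eI) => IaddE IN.
case: (Fadd J eJ) => JaddE JN.
case: (Fadd K eK) => KaddE KN.
have IJ : forall x, I (J x) = K x.
  move=> x; have := IJK (K x); rewrite KK JN IN => /eqP; by rewrite eqr_opp => /eqP.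
have JK : forall x, J (K x) = I x.
  move=> x; have := congr1 I (IJK x); by rewrite II IN => /eqP; rewrite eqr_opp => /eqP.
have IK : forall x, I (K x) = - J x by move=> x; rewrite -IJ II.
have JI : forall x, J (I x) = - K x by move=> x; rewrite -JK JJ.
have KI : forall x, K (I x) = J x by move=> x; rewrite -IJ JI IN IK opprK.
have KJ : forall x, K (J x) = - I x by move=> x; rewrite -IJ JJ IN.
have pD : forall x y z, pair (x + y) z = pair x z + pair y z.
  by move=> x y z; have := plin 1 x y z; rewrite scale1r mul1r.
have p0 : forall z, pair 0 z = 0.
  move=> z; have h := pD 0 0 z; rewrite addr0 in h.
  by apply: (@addrI _ (pair 0 z)); rewrite addr0 -h.
have pN : forall x z, pair (- x) z = - pair x z.
  by move=> x z; have := plin (-1) x 0 z; rewrite addr0 p0 addr0 scaleN1r mulN1r.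
have pN2 : forall x z, pair x (- z) = - pair x z by move=> x z; rewrite psym pN psym.
have pI : forall u w, pair (I u) w = - pair u (I w) by move=> u w; rewrite -(oI (I u)) II pN.
have pJ : forall u w, pair (J u) w = - pair u (J w) by move=> u w; rewrite -(oJ (J u)) JJ pN.
have pK : forall u w, pair (K u) w = - pair u (K w) by move=> u w; rewrite -(oK (K u)) KK pN.
have DD : forall f g, D (f + g) = D f + D g.
  move=> f g; apply/eqP; rewrite -subr_eq0; apply/eqP; apply: pnd => y.
  rewrite pD pN pD !Ddef; case: (rvf y) => rD _ _; rewrite rD mulrDr.
  zsolve.
have D0 : D 0 = 0.
  have h := DD 0 0; rewrite addr0 in h.
  by apply: (@addrI _ (D 0)); rewrite addr0 -h.
have DN : forall f, D (- f) = - D f.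
  move=> f; apply/eqP; rewrite -addr_eq0 -DD addrC subrr D0 //.
have nI : forall u v, nabla u (I v) = I (nabla u v).
  by move=> u v; have := HI u v; rewrite /cov_deriv => /eqP; rewrite subr_eq0 => /eqP.
have nJ : forall u v, nabla u (J v) = J (nabla u v).
  by move=> u v; have := HJ u v; rewrite /cov_deriv => /eqP; rewrite subr_eq0 => /eqP.
have nK : forall u v, nabla u (K v) = K (nabla u v).
  by move=> u v; have := HK u v; rewrite /cov_deriv => /eqP; rewrite subr_eq0 => /eqP.
have halfc : @Defs.half R A * (2%:R : A) = 1.
  rewrite /Defs.half -scalerAl mul1r.
  have -> : (2%:R : A) = (2%:R : R) *: (1 : A) by rewrite scaler_nat.
  by rewrite scalerA mulVf ?pnatr_eq0 // scale1r.
have dorfE : forall U V, dorf U V = nabla U V - nabla V U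
    - (I (D (pair U (I V))) + J (D (pair U (J V))) + K (D (pair U (K V))))
    + D (pair U V).
  move=> U V; have h := HT U V; rewrite /torsion /courant_bracket in h.
  have e2 : dorf V U = (2%:R : A) *: D (pair U V) - dorf U V.
    by rewrite -(psym V U) -dsym addrK.
  have hh : @Defs.half R A *: (dorf U V - dorf V U) = dorf U V - D (pair U V).
    rewrite e2 opprB addrA -mulr2n -scaler_nat -scalerBr scalerA halfc scale1r //.
  rewrite hh in h; rewrite -h.
  zsolve.
rewrite /nijenhuis !dorfE.
do 6 rewrite ?(IaddE, JaddE, KaddE, IN, JN, KN, nI, nJ, nK, IJ, IK, JI, JK, KI, KJ,
   II, JJ, KK, opprK, pI, pJ, pK, pN, pN2, DN).
zsolve.
Qed.
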